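(* Let $q^\star(\cdot\mid h)$ and $q_\theta(\cdot\mid h)$ be probability measures on $[0,B]$, and for $x\in[0,B]$ let $P^{\mathrm{obs}}_{h,x}$, $Q^{\mathrm{obs}}_{h,x}$ be their pushforwards under $d\mapsto(\min\{d,x\},\mathbf{1}\{d\le x\})$. Let $\eta\in(0,1]$ and let $\mu(\cdot\mid h)$ be any probability distribution on $[0,B]$ with $\mu(\{B\}\mid h)\ge\eta$. Then $$\mathrm{KL}(q^\star(\cdot\mid h)\|q_\theta(\cdot\mid h))\le\frac1\eta\,\mathbb{E}_{X\sim\mu(\cdot\mid h)}\big[\mathrm{KL}(P^{\mathrm{obs}}_{h,X}\|Q^{\mathrm{obs}}_{h,X})\big].$$
   Context: KL denotes Kullback–Leibler divergence. In the paper $q^\star,q_\theta$ are the true and learned conditional laws of the demand $D_t\in[0,B]$ given history $h$, and $\mu$ is the deployed action distribution. *)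

(* Defs.v *)
From HB Require Import structures.
From mathcomp Require Import all_boot all_order all_algebra.
From mathcomp Require Import all_classical all_reals all_analysis.
From mathcomp Require Import measurable_realfun.
Set Implicit Arguments. Unset Strict Implicit. Unset Printing Implicit Defensive.
Import Order.TTheory GRing.Theory Num.Theory.
Local Open Scope classical_set_scope.
Local Open Scope ring_scope.

Definition KL d (T : measurableType d) (R : realType) (P Q : probability T R)
    : \bar R :=
  if `[< P `<< Q >] then
    (\int[P]_x (ln (fine (Radon_Nikodym (charge_of_finite_measure P) Q x)))%:E)%E
  else +oo%E.

Definition obs (R : realType) (x : R) (t : R) : R * bool := (Order.min t x, t <= x).

Lemma measurable_obs (R : realType) (x : R) : measurable_fun setT (@obs R x).
Proof.
apply: measurable_fun_pair.
  exact: (measurable_minr (@measurable_id _ R setT) (measurable_cst x)).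
exact: (measurable_fun_ler (@measurable_id _ R setT) (measurable_cst x)).
Qed.

HB.instance Definition _ (R : realType) (x : R) :=
  isMeasurableFun.Build _ _ _ _ (@obs R x) (measurable_obs x).

Definition obs_law (R : realType) (q : probability R R) (x : R)
    : probability (R * bool)%type R :=
  distribution q (@obs R x).

(* Main.v *)
Require Import Defs.
From HB Require Import structures.
From mathcomp Require Import all_boot all_order all_algebra.
From mathcomp Require Import all_classical all_reals all_analysis.
From mathcomp Require Import measurable_realfun ring lra.
Import Order.TTheory GRing.Theory Num.Theory.
Set Implicit Arguments. Unset Strict Implicit.
Import HBNNSimple.
Local Open Scope classical_set_scope.
Local Open Scope ring_scope.
Lemma ylny (R : realType) (y : R) : 0 <= y ->
  (y - 1 <= y * ln y)%R /\ (y * Num.max (- ln y) 0 <= 1)%R.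
Proof.
move=> y0.
have key : (0 < y)%R -> (- ln y <= y^-1 - 1)%R.
  move=> yp; rewrite -lnV ?posrE //.
  have := @le_ln1Dx R (y^-1 - 1); rewrite addrCA subrr addr0; apply.

  by rewrite ltrBrDl addrN invr_gt0.
case: (ltP 0%R y) => yp; last first.
  have -> : y = 0%R by apply/le_anti; rewrite yp y0.
  by rewrite !mul0r; split; lra.
have k := key yp.
have h1 : (y * - ln y <= 1 - y)%R.
  have := ler_wpM2l (ltW yp) k; rewrite mulrBr mulrV ?unitfE ?gt_eqF // mulr1.
  by [].
split; first by rewrite mulrN in h1; lra.
rewrite /Num.max; case: ifPn => hl; [lra|].
lra.
Qed.

Lemma ylny2 (R : realType) (y : R) : 0 <= y ->
  y + y * Num.max (- ln y) 0 <= y * Num.max (ln y) 0 + 1.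
Proof.
move=> y0; have [h1 _] := @ylny _ y y0.
rewrite /Num.max; case: ifPn => a; case: ifPn => b; rewrite ?mulr0 ?mulrN. all: try lra.
move: a b; rewrite -!leNgt => a b.

have e : ln y = 0 by apply/le_anti; apply/andP; split; lra.
rewrite e mulr0 in h1 *; lra.
Qed.

Local Open Scope ereal_scope.

Lemma gibbs d (T : measurableType d) (R : realType) (P Q : probability T R) :
  P `<< Q ->
  0 <= \int[P]_x (ln (fine (Radon_Nikodym_SigmaFinite.f P Q x)))%:E.
Proof.
move=> PQ.
set g := Radon_Nikodym_SigmaFinite.f P Q.
have g0 := Radon_Nikodym_SigmaFinite.f_ge0 PQ.
have gf := Radon_Nikodym_SigmaFinite.f_fin_num PQ.
have gi := Radon_Nikodym_SigmaFinite.f_integrable PQ.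
have gI := Radon_Nikodym_SigmaFinite.f_integral PQ.
have mg : measurable_fun setT g by exact: measurable_int gi.
set h := fun x => fine (g x).
have gh x : g x = (h x)%:E by rewrite /h fineK.
have h0 x : (0 <= h x)%R by rewrite -lee_fin -gh.
have mh : measurable_fun setT h by apply: measurableT_comp.
set F := fun x => (ln (h x))%:E.
have mF : measurable_fun setT F.
  by apply/measurable_EFinP; apply: measurableT_comp.
have Fp x : F^\+ x = (Num.max (ln (h x)) 0)%:E by rewrite funeposE EFin_max.
have Fn x : F^\- x = (Num.max (- ln (h x)) 0)%:E by rewrite funenegE EFin_max.
have mFp : measurable_fun setT F^\+ by exact: measurable_funepos.
have mFn : measurable_fun setT F^\- by exact: measurable_funeneg.
have eP : \int[P]_x F^\+ x = \int[Q]_x (F^\+ x * g x).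
  rewrite Radon_Nikodym_SigmaFinite.change_of_variables //.
have eN : \int[P]_x F^\- x = \int[Q]_x (F^\- x * g x).
  rewrite Radon_Nikodym_SigmaFinite.change_of_variables //.
rewrite integralE eP eN.
set a := \int[Q]_x _.
set b := \int[Q]_x _.
have b0 : 0 <= b.
  apply: integral_ge0 => x _; rewrite Fn gh -EFinM lee_fin.
  by apply: mulr_ge0; rewrite ?le_max ?lexx ?orbT.
have b1 : b <= 1.
  rewrite (_ : 1 = \int[Q]_x cst 1 x); last first.
    by rewrite integral_cst // mul1e; apply/esym; exact: probability_setT.
  apply: ge0_le_integral => //.
  - move=> x _; rewrite Fn gh -EFinM lee_fin.
    by apply: mulr_ge0; rewrite ?le_max ?lexx ?orbT.
  - by apply: emeasurable_funM.
  - move=> x _; rewrite Fn gh -EFinM lee_fin.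
    by rewrite mulrC; have [_] := @ylny _ _ (h0 x).
have bfin : b \is a fin_num by rewrite ge0_fin_numE // (le_lt_trans b1) // ltry.
rewrite suber_ge0 //.
rewrite -(@leeD2lE _ 1 _ _ isT) [leRHS]addeC.
have -> : 1 = \int[Q]_x g x by rewrite -gI //; apply/esym; exact: probability_setT.
rewrite -ge0_integralD //. all: try (by move=> x _; rewrite ?Fn ?Fp ?gh -?EFinM lee_fin;
    apply: mulr_ge0; rewrite ?le_max ?lexx ?orbT). all: try (by apply: emeasurable_funM).
    all: try (by move=> x _; exact: g0).
rewrite (_ : \int[Q]_x g x = \int[Q]_x cst 1 x); last first.
  rewrite integral_cst // mul1e -gI //.
  exact: (etrans (probability_setT P) (esym (probability_setT Q))).
rewrite -ge0_integralD //. all: try (by move=> x _; rewrite ?Fn ?Fp ?gh -?EFinM lee_fin;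
    apply: mulr_ge0; rewrite ?le_max ?lexx ?orbT). all: try (by apply: emeasurable_funM).
apply: ge0_le_integral => //.
- by move=> x _; apply: adde_ge0 => //; rewrite Fn gh -EFinM lee_fin;
    apply: mulr_ge0; rewrite ?le_max ?lexx ?orbT.
- by apply: emeasurable_funD => //; apply: emeasurable_funM.
- by apply: emeasurable_funD => //; apply: emeasurable_funM.
- move=> x _; rewrite Fn Fp gh /= -!EFinM -!EFinD lee_fin.
  by rewrite ![(_ * h x)%R]mulrC; exact: (@ylny2 _ _ (h0 x)).

Qed.
Lemma KL_density d (T : measurableType d) (R : realType) (P Q : probability T R)
  (h : T -> R) : P `<< Q -> measurable_fun setT h ->
  (forall A, measurable A -> P A = \int[Q]_(x in A) (h x)%:E) ->
  KL P Q = \int[P]_x (ln (h x))%:E.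
Proof.
move=> PQ mh hP.
have PQ' : charge_of_finite_measure P `<< Q by [].
rewrite /KL asboolT //.
set g := Radon_Nikodym _ _.
have gi : Q.-integrable setT g by apply: Radon_Nikodym_integrable.
have aeQ : ae_eq Q setT g (fun x => (h x)%:E).
  apply: integral_ae_eq => //.
    exact/measurable_EFinP.
  move=> E _ mE; rewrite -hP //.
  by rewrite -Radon_Nikodym_integral.
have aeP : ae_eq P setT g (fun x => (h x)%:E).
  case: aeQ => N [mN QN sN]; exists N; split => //.
  by apply: (PQ N) => //; apply/(measure0_null_setP _ _).
apply: ae_eq_integral => //.
- apply/measurable_EFinP; apply: measurableT_comp => //.
  apply: measurableT_comp => //; apply: measurable_int gi.
- apply/measurable_EFinP; apply: measurableT_comp => //.
- move: aeP; apply: filterS => x /= gx /gx -> //.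
Qed.

Lemma SF_density d (T : measurableType d) (R : realType) (P Q : probability T R)
  (PQ : P `<< Q) (A : set T) : measurable A ->
  P A = \int[Q]_(x in A) (fine (Radon_Nikodym_SigmaFinite.f P Q x))%:E.
Proof.
move=> mA; rewrite (Radon_Nikodym_SigmaFinite.f_integral PQ) //.
by apply: eq_integral => x _; rewrite fineK // Radon_Nikodym_SigmaFinite.f_fin_num.
Qed.

Lemma SF_meas d (T : measurableType d) (R : realType) (P Q : probability T R)
  (PQ : P `<< Q) : measurable_fun setT (fun x => fine (Radon_Nikodym_SigmaFinite.f P Q x)).
Proof.
apply: measurableT_comp => //.
exact: measurable_int (Radon_Nikodym_SigmaFinite.f_integrable PQ).
Qed.

Lemma KL_ge0 d (T : measurableType d) (R : realType) (P Q : probability T R) :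
  0 <= KL P Q.
Proof.
case: (pselect (P `<< Q)) => PQ; last by rewrite /KL asboolF.
rewrite (KL_density PQ (SF_meas PQ) (SF_density PQ)).
exact: gibbs.
Qed.

Lemma mL (R : realType) (B : R) : measurable (`]-oo, B]%classic : set R).
Proof. exact: measurable_itv. Qed.

Lemma nullC (R : realType) (B : R) (P : probability R R) :
  P `[0%R, B]%classic = 1 -> P (~` `]-oo, B]%classic) = 0.
Proof.
move=> h; apply/eqP; rewrite eq_le measure_ge0 andbT.
have mI : measurable (`[0%R, B]%classic : set R) by exact: measurable_itv.
rewrite -[X in _ <= X](@subee _ 1) //.
rewrite -{2}h -probability_setC //.
apply: le_measure; rewrite ?inE.
- by apply: measurableC; exact: mL.
- exact: measurableC.
- apply: subsetC => t /=; rewrite !in_itv /= => /andP[_ ->] //.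
Qed.

Lemma PAL (R : realType) (B : R) (P : probability R R) A :
  P `[0%R, B]%classic = 1 -> measurable A -> P A = P (A `&` `]-oo, B]%classic).
Proof.
move=> h mA.
transitivity (P (A `\` `]-oo, B]%classic) + P (A `&` `]-oo, B]%classic)).
  exact: (measureDI P mA (mL B)).
have -> : P (A `\` `]-oo, B]%classic) = 0.
  apply/eqP; rewrite eq_le measure_ge0 andbT -(nullC h).
  apply: le_measure; rewrite ?inE.
  - by apply: measurableD => //; exact: mL.
  - by apply: measurableC; exact: mL.
  - by move=> t [].
by rewrite add0e.
Qed.

Lemma obs_pre (R : realType) (B : R) (A : set R) :
  obs B @^-1` ((A `&` `]-oo, B]%classic) `*` [set true]) = A `&` `]-oo, B]%classic.
Proof.
apply/seteqP; split => t /=; rewrite /obs /= !in_itv /=.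
- case: (leP t B) => tB; first by move=> [[At _] _].
  by move=> [_].
- by case=> At tB; rewrite tB (min_l tB).

Qed.

Lemma mC (R : realType) (B : R) (A : set R) : measurable A ->
  measurable ((A `&` `]-oo, B]%classic) `*` [set true]).
Proof. move=> mA; apply: measurableX => //; apply: measurableI => //; exact: mL. Qed.

Lemma dom1 (R : realType) (B : R) (P Q : probability R R) :
  P `<< Q -> obs_law P B `<< obs_law Q B.
Proof.
move=> /null_content_dominatesP PQ; apply/null_content_dominatesP => A mA QA.
have mpre : measurable (obs B @^-1` A).
  by have := measurable_obs B measurableT mA; rewrite setTI.
exact: PQ.
Qed.

Lemma dom2 (R : realType) (B : R) (P Q : probability R R) :
  P `[0%R, B]%classic = 1 -> Q `[0%R, B]%classic = 1 ->
  obs_law P B `<< obs_law Q B -> P `<< Q.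
Proof.
move=> hP hQ /null_content_dominatesP PQ; apply/null_content_dominatesP => A mA QA.
rewrite (PAL hP mA) -obs_pre.
apply: (PQ _ (mC B mA)).
change (Q (obs B @^-1` ((A `&` `]-oo, B]%classic) `*` [set true])) = 0); rewrite obs_pre.
apply/eqP; rewrite eq_le measure_ge0 andbT -QA.
apply: le_measure; rewrite ?inE //.
- by apply: measurableI => //; exact: mL.
Qed.

Lemma KL_obsB (R : realType) (B : R) (P Q : probability R R) :
  P `[0%R, B]%classic = 1 -> Q `[0%R, B]%classic = 1 ->
  KL P Q = KL (obs_law P B) (obs_law Q B).
Proof.
move=> hP hQ.
case: (pselect (P `<< Q)) => PQ; last first.
  have nPQ' : ~ (obs_law P B `<< obs_law Q B) by move/(dom2 hP hQ).
  by rewrite /KL !asboolF.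
have PQ' : obs_law P B `<< obs_law Q B := dom1 PQ.
set P' := obs_law P B; set Q' := obs_law Q B.
set g := fun s => fine (Radon_Nikodym_SigmaFinite.f P' Q' s).
have mg : measurable_fun setT g := SF_meas PQ'.
have mh : measurable_fun setT (g \o obs B).
  exact: measurableT_comp mg (measurable_obs B).
have dens : forall A, measurable A -> P A = \int[Q]_(x in A) ((g \o obs B) x)%:E.
  move=> A mA.
  rewrite (PAL hP mA) -obs_pre.
  transitivity (\int[pushforward Q (obs B)]_(x in (A `&` `]-oo, B]%classic) `*` [set true]) (g x)%:E).
    exact: (SF_density PQ' (mC B mA)).
  rewrite ge0_integral_pushforward //; last 3 first.
    - exact: mC.
    - by apply/measurable_EFinP; apply: measurable_funTS.
    - by move=> x _; rewrite lee_fin fine_ge0 // Radon_Nikodym_SigmaFinite.f_ge0.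
  rewrite obs_pre.
  rewrite [RHS](ge0_negligible_integral (N := ~` `]-oo, B]%classic)) //.
  - by rewrite setDE setCK.
  - by apply: measurableC; exact: mL.
  - by apply/measurable_EFinP; apply: measurable_funTS.
  - by move=> x _; rewrite lee_fin fine_ge0 // Radon_Nikodym_SigmaFinite.f_ge0.
  - exact: nullC.
rewrite (KL_density PQ mh dens) (KL_density PQ' mg (SF_density PQ')).
rewrite [LHS]integralE [RHS]integralE.
have mF : measurable_fun setT (fun s => (ln (g s))%:E).
  by apply/measurable_EFinP; apply: measurableT_comp.
congr (_ - _).
- transitivity (\int[pushforward P (obs B)]_x (fun s => (ln (g s))%:E)^\+ x); last by [].
  rewrite ge0_integral_pushforward //; last exact: measurable_funepos.
  rewrite (_ : obs B @^-1` setT = setT :> set R) //; apply: eq_integral => x _. rewrite /comp !funeposE /=. reflexivity.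

- transitivity (\int[pushforward P (obs B)]_x (fun s => (ln (g s))%:E)^\- x); last by [].
  rewrite ge0_integral_pushforward //; last exact: measurable_funeneg.
  rewrite (_ : obs B @^-1` setT = setT :> set R) //; apply: eq_integral => x _. rewrite /comp !funenegE /=. reflexivity.
Qed.

Lemma int_lb d (T : measurableType d) (R : realType) (mu : {measure set T -> \bar R})
  (f : T -> \bar R) (h : {nnsfun T >-> R}) :
  (forall x, 0 <= f x) -> (forall x, (h x)%:E <= f x) ->
  \int[mu]_x (h x)%:E <= \int[mu]_x f x.
Proof.
move=> f0 hf; rewrite [leRHS]ge0_integralTE // [leLHS]integral_nnsfun // patch_setT.
by apply: ereal_sup_ubound; exists h.
Qed.

Unset Implicit Arguments.
Local Close Scope ereal_scope.

Theorem lemmaC19 (R : realType) (B eta : R)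
    (qstar qtheta mu : probability R R)
    (hqstar : qstar `[0, B]%classic = 1%E)
    (hqtheta : qtheta `[0, B]%classic = 1%E)
    (hmu : mu `[0, B]%classic = 1%E)
    (heta : 0 < eta <= 1)
    (hmuB : (eta%:E <= mu [set B])%E) :
  (KL qstar qtheta
    <= (eta^-1)%:E * \int[mu]_x KL (obs_law qstar x) (obs_law qtheta x))%E.
Proof.
Local Open Scope ereal_scope.
have eta0 : (0 < eta)%R by case/andP: heta.
set K := fun x => KL (obs_law qstar x) (obs_law qtheta x).
have K0 : forall x, 0 <= K x by move=> x; exact: KL_ge0.
set I := \int[mu]_x _.
have I0 : 0 <= I by apply: integral_ge0 => x _; exact: K0.
have m1 : measurable [set B] := measurable_set1 B.
have lb : forall c : R, (0 <= c)%R -> c%:E <= K B -> (c * eta)%:E <= I.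
  move=> c c0 cK.
  pose h := scale_nnsfun (indic_nnsfun R m1) c0.
  have hE x : h x = (c * \1_[set B] x)%R by [].
  have := @int_lb _ _ _ mu K h K0.
  have hK : forall x, (h x)%:E <= K x.
    move=> x; rewrite hE /indic; case: (pselect (x = B)) => [->|xB].
      by rewrite mem_set // mulr1.
    by rewrite memNset // mulr0.
  move=> /(_ hK) hI; apply: le_trans hI.
  under eq_integral do rewrite hE EFinM.
  rewrite ge0_integralZl //; last first.
    by apply/measurable_EFinP; exact: measurable_indic.
  rewrite integral_indic // setIT EFinM.
  by apply: lee_wpmul2l; rewrite ?lee_fin.
have -> : KL qstar qtheta = K B by exact: KL_obsB.
move: I0 lb; case: I => [s| |] // I0 lb; last first.
  by rewrite gt0_muley ?leey // lte_fin invr_gt0.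
move: (K0 B) lb; case: (K B) => [r| |] // r0 lb.
- rewrite -EFinM lee_fin ler_pdivlMl // mulrC.
  by rewrite -lee_fin; apply: lb; rewrite -?lee_fin.
- have := lb ((s + 1) / eta)%R.
  have c0 : (0 <= (s + 1) / eta)%R.
    by apply: divr_ge0; [rewrite lee_fin in I0; lra | exact: ltW].
  move=> /(_ c0 (leey _)).
  by rewrite lee_fin divfK ?gt_eqF // leNgt ltrDl ltr01.
Qed.
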